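(* Let $L$ be a distributive lattice and $\mathbf x,\mathbf y\in L^n$. Then $\mathbf x$ and $\mathbf y$ are g-comonotone if and only if $\bigwedge_{i\in I}(x_i\vee y_i)=\bigwedge_{i\in I}x_i\vee\bigwedge_{i\in I}y_i$ for every non-empty subset $I\subseteq\{1,\dots,n\}$. Similarly, $\mathbf x$ and $\mathbf y$ are dually g-comonotone if and only if $\bigvee_{i\in I}(x_i\wedge y_i)=\bigvee_{i\in I}x_i\wedge\bigvee_{i\in I}y_i$ for every non-empty subset $I\subseteq\{1,\dots,n\}$.
   Context: $\mathbf x,\mathbf y\in L^n$ are g-comonotone if for every pair $i,j\in\{1,\dots,n\}$: $(x_i\vee y_i)\wedge(x_j\vee y_j)=(x_i\wedge x_j)\vee(y_i\wedge y_j)$; dually g-comonotone if for every pair $i,j$: $(x_i\wedge y_i)\vee(x_j\wedge y_j)=(x_i\vee x_j)\wedge(y_i\vee y_j)$. *)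

(* Defs.v *)
From mathcomp Require Import all_boot all_order.
Set Implicit Arguments. Unset Strict Implicit. Unset Printing Implicit Defensive.
Import Order.LTheory.
Local Open Scope order_scope.

(* Vectors in L^n are functions 'I_n -> L (index set {0,...,n-1}). *)

Definition g_comonotone d (L : latticeType d) n (x y : 'I_n -> L) : Prop :=
  forall i j : 'I_n,
    ((x i `|` y i) `&` (x j `|` y j)) = ((x i `&` x j) `|` (y i `&` y j)).

Definition dually_g_comonotone d (L : latticeType d) n (x y : 'I_n -> L) : Prop :=
  forall i j : 'I_n,
    ((x i `&` y i) `|` (x j `&` y j)) = ((x i `|` x j) `&` (y i `|` y j)).

(* Meet / join over a non-empty subset I of 'I_n (L need not be bounded):
   we seed the iteration with x i0 for some i0 \in I; by idempotency this
   is exactly the meet (resp. join) of the x i, i \in I. *)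
Definition bigmeet_ne d (L : latticeType d) n (I : {set 'I_n}) (i0 : 'I_n)
  (x : 'I_n -> L) : L := \big[Order.meet/x i0]_(i in I) x i.

Definition bigjoin_ne d (L : latticeType d) n (I : {set 'I_n}) (i0 : 'I_n)
  (x : 'I_n -> L) : L := \big[Order.join/x i0]_(i in I) x i.

(* Main.v *)
Require Import Defs.
From mathcomp Require Import all_boot all_order.
Local Open Scope order_scope.
Import Order.LTheory.

Section Aux.
Context (d : Order.disp_t) (L : distrLatticeType d) (n : nat).

Lemma meet_ub (I : {set 'I_n}) a (F : 'I_n -> L) j : j \in I ->
  \big[Order.meet/a]_(i in I) F i <= F j.
Proof.
rewrite -big_enum -mem_enum; elim: (enum I) => //= i s IH.
rewrite inE big_cons => /orP [/eqP ->|/IH h]; first exact: leIl.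
exact: le_trans (leIr _ _) h.
Qed.

Lemma meet_lb (I : {set 'I_n}) a (F : 'I_n -> L) z : z <= a ->
  (forall i, i \in I -> z <= F i) -> z <= \big[Order.meet/a]_(i in I) F i.
Proof.
move=> za zF; apply: (big_ind (fun v => z <= v)) => //.
by move=> u v zu zv; rewrite lexI zu zv.
Qed.

Lemma join_lb (I : {set 'I_n}) a (F : 'I_n -> L) j : j \in I ->
  F j <= \big[Order.join/a]_(i in I) F i.
Proof.
rewrite -big_enum -mem_enum; elim: (enum I) => //= i s IH.
rewrite inE big_cons => /orP [/eqP ->|/IH h]; first exact: leUl.
exact: le_trans h (leUr _ _).
Qed.

Lemma join_ub (I : {set 'I_n}) a (F : 'I_n -> L) z : a <= z ->
  (forall i, i \in I -> F i <= z) -> \big[Order.join/a]_(i in I) F i <= z.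
Proof.
move=> za zF; apply: (big_ind (fun v => v <= z)) => //.
by move=> u v zu zv; rewrite leUx zu zv.
Qed.

Lemma meet_lb2 (I : {set 'I_n}) i0 (F : 'I_n -> L) z : i0 \in I ->
  (forall i, i \in I -> z <= F i) -> z <= \big[Order.meet/F i0]_(i in I) F i.
Proof. by move=> i0I zF; apply: meet_lb => //; apply: zF. Qed.

Lemma join_ub2 (I : {set 'I_n}) i0 (F : 'I_n -> L) z : i0 \in I ->
  (forall i, i \in I -> F i <= z) -> \big[Order.join/F i0]_(i in I) F i <= z.
Proof. by move=> i0I zF; apply: join_ub => //; apply: zF. Qed.

Lemma join_bigmeet (I : {set 'I_n}) i0 (F : 'I_n -> L) (a : L) :
  a `|` \big[Order.meet/F i0]_(i in I) F i
  = \big[Order.meet/(a `|` F i0)]_(i in I) (a `|` F i).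
Proof. by apply: (big_morph (fun v => a `|` v)) => // u v; rewrite joinIr. Qed.

Lemma meet_bigjoin (I : {set 'I_n}) i0 (F : 'I_n -> L) (a : L) :
  a `&` \big[Order.join/F i0]_(i in I) F i
  = \big[Order.join/(a `&` F i0)]_(i in I) (a `&` F i).
Proof. by apply: (big_morph (fun v => a `&` v)) => // u v; rewrite meetUr. Qed.

Lemma meet2 (i j : 'I_n) (F : 'I_n -> L) :
  \big[Order.meet/F i]_(k in [set i; j]) F k = F i `&` F j.
Proof.
apply/le_anti; rewrite lexI !meet_ub ?inE ?eqxx ?orbT //=.
apply: meet_lb; first exact: leIl.
by move=> k; rewrite !inE => /orP [] /eqP ->; [exact: leIl | exact: leIr].
Qed.

Lemma join2 (i j : 'I_n) (F : 'I_n -> L) :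
  \big[Order.join/F i]_(k in [set i; j]) F k = F i `|` F j.
Proof.
apply/le_anti/andP; split; last by rewrite leUx !join_lb ?inE ?eqxx ?orbT.
apply: join_ub; first exact: leUl.
by move=> k; rewrite !inE => /orP [] /eqP ->; [exact: leUl | exact: leUr].
Qed.

End Aux.

Theorem lemma2 (d : Order.disp_t) (L : distrLatticeType d) (n : nat)
    (x y : 'I_n -> L) :
  (g_comonotone x y <->
     forall (I : {set 'I_n}) (i0 : 'I_n), i0 \in I ->
       bigmeet_ne I i0 (fun i => x i `|` y i)
       = bigmeet_ne I i0 x `|` bigmeet_ne I i0 y)
  /\
  (dually_g_comonotone x y <->
     forall (I : {set 'I_n}) (i0 : 'I_n), i0 \in I ->
       bigjoin_ne I i0 (fun i => x i `&` y i)
       = bigjoin_ne I i0 x `&` bigjoin_ne I i0 y).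
Proof.
rewrite /bigmeet_ne /bigjoin_ne; split; split.
- move=> H I i0 i0I; apply/le_anti/andP; split; last first.
    apply: meet_lb2 => // k kI; apply: leU2; exact: meet_ub.
  rewrite join_bigmeet; apply: meet_lb2 => // j jI.
  rewrite [_ `|` y j]joinC join_bigmeet; apply: meet_lb2 => // i iI.
  apply: le_trans (_ : (x i `|` y i) `&` (x j `|` y j) <= _).
    by rewrite lexI !meet_ub.
  by rewrite H joinC; apply: leU2; [exact: leIr | exact: leIl].
- move=> H i j; have := H [set i; j] i; rewrite !meet2 => -> //.
  by rewrite !inE eqxx.
- move=> H I i0 i0I; apply/le_anti/andP; split.
    apply: join_ub2 => // k kI; apply: leI2; exact: join_lb.
  rewrite meet_bigjoin; apply: join_ub2 => // j jI.
  rewrite [_ `&` y j]meetC meet_bigjoin; apply: join_ub2 => // i iI.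
  apply: (@le_trans _ _ ((x i `&` y i) `|` (x j `&` y j))).
    rewrite H lexI; apply/andP; split; [exact: le_trans (leIr _ _) (leUl _ _) | exact: le_trans (leIl _ _) (leUr _ _)].
  by rewrite leUx !join_lb.
- move=> H i j; have := H [set i; j] i; rewrite !join2 => -> //.
  by rewrite !inE eqxx.
Qed.
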